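(* Let $S \subseteq \mathbb{R}^r$ be a linear subspace, $0 \le d \le r$, and $C = C(S,d)$ the associated s-cone. For a nonzero vector $x \in C$, the following are equivalent: (i) $x$ is support-minimal; (ii) $x$ is support-wise non-decomposable; (iii) $x$ is conformally non-decomposable.
   Context: For $x \in \mathbb{R}^n$, $\operatorname{supp}(x) = \{ i \mid x_i \neq 0\}$, and $\operatorname{sign}(x) \in \{-,0,+\}^n$ is obtained by applying the sign function componentwise; the relations $0<-$, $0<+$ induce a componentwise partial order on $\{-,0,+\}^n$. For a linear subspace $S \subseteq \mathbb{R}^r$ and $0 \le d \le r$, the s-cone is $C(S,d) = \{ (x,y) \in \mathbb{R}^{(r-d)+d} \mid (x,y) \in S,\ y \ge 0\}$. For a convex cone $C$ and nonzero $x \in C$: $x$ is support-minimal if for all nonzero $x' \in C$, $\operatorname{supp}(x') \subseteq \operatorname{supp}(x)$ implies $\operatorname{supp}(x') = \operatorname{supp}(x)$; $x$ is support-wise non-decomposable if for all nonzero $x^1,x^2 \in C$ with $\operatorname{supp}(x^1),\operatorname{supp}(x^2) \subseteq \operatorname{supp}(x)$, $x = x^1 + x^2$ implies $\operatorname{supp}(x^1) = \operatorname{supp}(x^2)$; $x$ is conformally non-decomposable if for all nonzero $x^1,x^2 \in C$ with $\operatorname{sign}(x^1),\operatorname{sign}(x^2) \le \operatorname{sign}(x)$, $x = x^1 + x^2$ implies $x^1 = \lambda x^2$ for some $\lambda > 0$. *)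

(* Defs.v *)
From mathcomp Require Import all_boot all_order all_algebra.
From mathcomp Require Import reals.
Set Implicit Arguments. Unset Strict Implicit. Unset Printing Implicit Defensive.
Import Order.TTheory GRing.Theory Num.Theory.
Local Open Scope ring_scope.

Section Defs.
Variables (R : realType) (r : nat).

Definition supp (x : 'rV[R]_r) : {set 'I_r} := [set i | x 0 i != 0].

(* sign(x) in {-,0,+}^r, encoded by Num.sg in {-1,0,1} *)
Definition signv (x : 'rV[R]_r) : 'I_r -> R := fun i => Num.sg (x 0 i).

(* componentwise partial order on {-,0,+}^r induced by 0 < -, 0 < + *)
Definition sign_le (s t : 'I_r -> R) : Prop :=
  forall i, s i = 0 \/ s i = t i.

(* s-cone C(S,d): (x,y) in S with y >= 0, where y is the block of the last
   d coordinates, i.e. indices i with r - d <= i. *)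
Definition scone (S : {vspace 'rV[R]_r}) (d : nat) (x : 'rV[R]_r) : Prop :=
  x \in S /\ forall i : 'I_r, (r - d <= i)%N -> 0 <= x 0 i.

Definition support_minimal (C : 'rV[R]_r -> Prop) (x : 'rV[R]_r) : Prop :=
  forall x', C x' -> x' != 0 -> supp x' \subset supp x -> supp x' = supp x.

Definition supportwise_nondecomposable (C : 'rV[R]_r -> Prop) (x : 'rV[R]_r)
  : Prop :=
  forall x1 x2, C x1 -> C x2 -> x1 != 0 -> x2 != 0 ->
    supp x1 \subset supp x -> supp x2 \subset supp x ->
    x = x1 + x2 -> supp x1 = supp x2.

Definition conformally_nondecomposable (C : 'rV[R]_r -> Prop) (x : 'rV[R]_r)
  : Prop :=
  forall x1 x2, C x1 -> C x2 -> x1 != 0 -> x2 != 0 ->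
    sign_le (signv x1) (signv x) -> sign_le (signv x2) (signv x) ->
    x = x1 + x2 -> exists2 lambda : R, 0 < lambda & x1 = lambda *: x2.

End Defs.

(* Main.v *)
Set Warnings "-notation-overridden,-ambiguous-paths".
Set Implicit Arguments. Unset Strict Implicit.
Require Import Defs.
From mathcomp Require Import all_boot all_order all_algebra.
From mathcomp Require Import reals ring lra.
Import Order.TTheory GRing.Theory Num.Theory.
Local Open Scope ring_scope.

Section L.
Variables (R : realType) (r : nat).
Implicit Types (x y : 'rV[R]_r).

Lemma sg_eq_of_mul (a b : R) : 0 < a * b -> Num.sg a = Num.sg b.
Proof.
move=> h; case: (ltrgt0P a) => ha.
- have hb : 0 < b by rewrite -(pmulr_rgt0 _ ha).
  by rewrite !gtr0_sg.
- have hb : b < 0 by nra.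
  by rewrite !ltr0_sg.
- by move: h; rewrite ha mul0r ltxx.
Qed.

Lemma keyL x x' :
  (forall i, x 0 i = 0 -> x' 0 i = 0) -> (exists i0, 0 < x 0 i0 * x' 0 i0) ->
  exists2 t : R, 0 < t & sign_le (signv (x - t *: x')) (signv x) /\
    exists j, x 0 j != 0 /\ (x - t *: x') 0 j = 0.
Proof.
move=> hsub [i0 Pi0].
pose P := [pred i | 0 < x 0 i * x' 0 i].
have Pi0' : P i0 by [].
have [j Pj Hmin] := arg_minP (fun i => x 0 i / x' 0 i) Pi0'.
have hxj : x 0 j != 0 by apply/eqP => e; move: Pj; rewrite inE e mul0r ltxx.
have hx'j : x' 0 j != 0 by apply/eqP => e; move: Pj; rewrite inE e mulr0 ltxx.
set t := x 0 j / x' 0 j.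
have tpos : 0 < t.
  have -> : t = (x 0 j * x' 0 j) / (x' 0 j ^+ 2) by rewrite /t; field; exact: hx'j.
  by apply: divr_gt0 => //; rewrite exprn_even_gt0.
exists t => //; split; last first.
  exists j; split => //; rewrite !mxE /t; field; exact: hx'j.
move=> i; rewrite /signv.
have e : (x - t *: x') 0 i = x 0 i - t * x' 0 i by rewrite !mxE.
rewrite e.
have [x0|xn0] := eqVneq (x 0 i) 0.
  by left; rewrite x0 (hsub _ x0) mulr0 subr0 sgr0.
have hge : 0 <= x 0 i * (x 0 i - t * x' 0 i).
  case: (boolP (P i)) => Pi.
  - have h := Hmin i Pi; rewrite inE in Pi.
    have : t * (x 0 i * x' 0 i) <= x 0 i / x' 0 i * (x 0 i * x' 0 i).
      by apply: ler_wpM2r => //; apply: ltW.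
    have hx'i : x' 0 i != 0 by apply/eqP => e'; move: Pi; rewrite e' mulr0 ltxx.
    have -> : x 0 i / x' 0 i * (x 0 i * x' 0 i) = x 0 i * x 0 i by field.
    nra.
  - rewrite inE -leNgt in Pi.
    have : 0 <= x 0 i * x 0 i by nra.
    nra.
have [y0|yn0] := eqVneq (x 0 i - t * x' 0 i) 0.
  by left; rewrite y0 sgr0.
right; apply/esym/sg_eq_of_mul.
by rewrite lt_neqAle eq_sym mulf_eq0 negb_or xn0 yn0.
Qed.

Lemma mul_gt0_of_sg (a b : R) : a != 0 -> Num.sg a = Num.sg b -> 0 < a * b.
Proof.
move=> ha e; case: (ltrgt0P a) => h.
- have : 0 < Num.sg b by rewrite -e gtr0_sg.
  rewrite sgr_gt0 => hb; exact: mulr_gt0.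
- have : Num.sg b < 0 by rewrite -e ltr0_sg // ltrN10.
  rewrite sgr_lt0 => hb; nra.
- by move: ha; rewrite h eqxx.
Qed.

Lemma conf_zero (y x : 'rV[R]_r) : sign_le (signv y) (signv x) ->
  forall i, x 0 i = 0 -> y 0 i = 0.
Proof.
move=> h i xi; apply/eqP; rewrite -sgr_eq0; apply/eqP.
by case: (h i); rewrite /signv // xi sgr0.
Qed.

Lemma conf_nz (y x : 'rV[R]_r) : sign_le (signv y) (signv x) ->
  forall i, y 0 i != 0 -> Num.sg (y 0 i) = Num.sg (x 0 i).
Proof.
move=> h i yi; case: (h i); rewrite /signv // => /eqP; by rewrite sgr_eq0 (negbTE yi).
Qed.

Lemma conf_trans (a b c : 'rV[R]_r) : sign_le (signv a) (signv b) ->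
  sign_le (signv b) (signv c) -> sign_le (signv a) (signv c).
Proof.
move=> h1 h2 i; case: (h1 i) => e; first by left.
case: (h2 i) => e'; [left; by rewrite e | right; by rewrite e].
Qed.

Lemma signvZ (s : R) (y : 'rV[R]_r) : 0 < s -> signv (s *: y) = signv y.
Proof.
move=> hs; rewrite /signv; apply: boolp.funext => i.
by rewrite mxE sgrM gtr0_sg // mul1r.
Qed.

Lemma conf_C (S : {vspace 'rV[R]_r}) d (x y : 'rV[R]_r) : scone S d x ->
  y \in S -> sign_le (signv y) (signv x) -> scone S d y.
Proof.
move=> [_ hx] yS h; split => // i hi.
case: (h i); rewrite /signv.
- by move/eqP; rewrite sgr_eq0 => /eqP ->.
- by move=> e; rewrite -sgr_ge0 e sgr_ge0; apply: hx.
Qed.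

Lemma row_nz (y : 'rV[R]_r) : y != 0 -> exists i, y 0 i != 0.
Proof.
move=> hy; apply: boolp.contrapT => hn; move/eqP: hy; apply; apply/rowP => i.
rewrite mxE; apply: boolp.contrapT => hi; apply: hn; exists i; exact/eqP.
Qed.

Lemma agree (y x : 'rV[R]_r) : y != 0 -> sign_le (signv y) (signv x) ->
  exists i, 0 < x 0 i * y 0 i.
Proof.
move=> hy h; have [i hi] := row_nz hy; exists i.
have e := conf_nz h hi.
have hx : x 0 i != 0 by rewrite -sgr_eq0 -e sgr_eq0.
by apply: mul_gt0_of_sg => //; rewrite e.
Qed.

Lemma keyM (S : {vspace 'rV[R]_r}) d (x x' : 'rV[R]_r) :
  scone S d x -> scone S d x' -> x' != 0 -> supp x' \subset supp x ->
  supp x' != supp x ->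
  exists y, exists z, exists j, [/\ x = z + y, y != 0, scone S d y, scone S d z &
    (sign_le (signv y) (signv x) /\ sign_le (signv z) (signv x) /\
    y 0 j = 0 /\ x 0 j != 0)].
Proof.
move=> hCx hCx' hx' hsub hne.
have hz : forall i, x 0 i = 0 -> x' 0 i = 0.
  move=> i xi; apply/eqP; apply: boolp.contrapT => hi.
  have : i \in supp x' by rewrite inE; apply/negP.
  by move/(subsetP hsub); rewrite inE xi eqxx.
have [k [xk x'k]] : exists k, x 0 k != 0 /\ x' 0 k = 0.
  apply: boolp.contrapT => hn; move/eqP: hne; apply; apply/eqP.
  rewrite eqEsubset hsub /=; apply/subsetP => i; rewrite !inE => xi.
  apply/eqP => e; apply: hn; by exists i.
have [x'' [x''S hz'' ag x''k]] : exists x'', [/\ x'' \in S,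
    (forall i, x 0 i = 0 -> x'' 0 i = 0), (exists i, 0 < x 0 i * x'' 0 i) &
    x'' 0 k = 0].
  have [[i hi]|hn] := boolp.pselect (exists i, 0 < x 0 i * x' 0 i).
    by exists x'; split => //; [case: hCx' | exists i].
  exists (- x'); split.
  - by rewrite memvN; case: hCx'.
  - by move=> i xi; rewrite mxE hz // oppr0.
  - have [i hi] := row_nz hx'; exists i; rewrite mxE mulrN oppr_gt0.
    have xi : x 0 i != 0 by apply/eqP => e; move: hi; rewrite hz // eqxx.
    rewrite lt_neqAle mulf_eq0 negb_or xi hi /= leNgt.
    by apply/negP => h; apply: hn; exists i.
  - by rewrite mxE x'k oppr0.
have [t tpos [hc0 [j [xj y0j]]]] := keyL hz'' ag.
set y0 := x - t *: x'' in hc0 y0j.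
have y0nz : y0 != 0.
  apply/eqP => e; move/eqP: xk; apply.
  have : y0 0 k = 0 by rewrite e mxE.
  by rewrite !mxE x''k mulr0 subr0.
have y0S : y0 \in S by apply: memvB; [case: hCx | apply: memvZ].
have [s spos [hcz _]] := keyL (conf_zero hc0) (agree y0nz hc0).
exists (s *: y0), (x - s *: y0), j; split.
- by rewrite subrK.
- by rewrite scaler_eq0 negb_or y0nz gt_eqF.
- by apply: (conf_C hCx); [apply: memvZ | rewrite signvZ].
- by apply: (conf_C hCx) => //; apply: memvB; [case: hCx | apply: memvZ].
- split; first by rewrite signvZ.
  split => //; split => //; by rewrite mxE y0j mulr0.
Qed.

End L.

Theorem proposition2 (R : realType) (r d : nat) (hd : (d <= r)%N)
  (S : {vspace 'rV[R]_r}) (x : 'rV[R]_r) :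
  scone S d x -> x != 0 ->
  (support_minimal (scone S d) x <-> supportwise_nondecomposable (scone S d) x)
  /\ (supportwise_nondecomposable (scone S d) x <->
      conformally_nondecomposable (scone S d) x).
Proof.
move=> hCx hx.
have ii_i : supportwise_nondecomposable (scone S d) x ->
    support_minimal (scone S d) x.
  move=> h x' hC' hx' hs; apply/eqP; apply: boolp.contrapT => hne.
  have [y [z [j [e ynz hCy hCz [cy [cz [yj xj]]]]]]] := keyM hCx hC' hx' hs (introN idP hne).
  have zj : z 0 j != 0 by move: xj; rewrite e mxE yj addr0.
  have znz : z != 0 by apply/eqP => ez; move: zj; rewrite ez mxE eqxx.
  have subx : forall w, sign_le (signv w) (signv x) -> supp w \subset supp x.
    move=> w cw; apply/subsetP => i; rewrite !inE; apply: contra => /eqP xi.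
    by rewrite (conf_zero cw xi).
  have := h z y hCz hCy znz ynz (subx _ cz) (subx _ cy) e.
  move/setP/(_ j); rewrite !inE zj yj eqxx //.
have iii_i : conformally_nondecomposable (scone S d) x ->
    support_minimal (scone S d) x.
  move=> h x' hC' hx' hs; apply/eqP; apply: boolp.contrapT => hne.
  have [y [z [j [e ynz hCy hCz [cy [cz [yj xj]]]]]]] := keyM hCx hC' hx' hs (introN idP hne).
  have zj : z 0 j != 0 by move: xj; rewrite e mxE yj addr0.
  have znz : z != 0 by apply/eqP => ez; move: zj; rewrite ez mxE eqxx.
  have [l _ ez] := h z y hCz hCy znz ynz cz cy e.
  by move: zj; rewrite ez mxE yj mulr0 eqxx.
have i_ii : support_minimal (scone S d) x ->
    supportwise_nondecomposable (scone S d) x.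
  move=> h x1 x2 hC1 hC2 n1 n2 s1 s2 _.
  by rewrite (h x1 hC1 n1 s1) (h x2 hC2 n2 s2).
have i_iii : support_minimal (scone S d) x ->
    conformally_nondecomposable (scone S d) x.
  move=> h x1 x2 hC1 hC2 n1 n2 c1 c2 e.
  have subx : forall w, sign_le (signv w) (signv x) -> supp w \subset supp x.
    move=> w cw; apply/subsetP => i; rewrite !inE; apply: contra => /eqP xi.
    by rewrite (conf_zero cw xi).
  have full : forall i, x 0 i != 0 -> x1 0 i != 0.
    move=> i xi; have := h x1 hC1 n1 (subx _ c1).
    by move/setP/(_ i); rewrite !inE xi => ->.
  have hz : forall i, x1 0 i = 0 -> x2 0 i = 0.
    move=> i x1i; apply: (conf_zero c2); apply/eqP; apply: boolp.contrapT => xi.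
    by move: (full i (introN idP xi)); rewrite x1i eqxx.
  have ag : exists i, 0 < x1 0 i * x2 0 i.
    have [k hk] := row_nz n2.
    have e2 := conf_nz c2 hk.
    have xk : x 0 k != 0 by rewrite -sgr_eq0 -e2 sgr_eq0.
    have e1 := conf_nz c1 (full k xk).
    by exists k; apply: mul_gt0_of_sg; [exact: full | rewrite e1 e2].
  have [t tpos [hc [j [x1j yj]]]] := keyL hz ag.
  have [ye|ynz] := eqVneq (x1 - t *: x2) 0.
    by exists t => //; apply/eqP; rewrite -subr_eq0 ye.
  have cy := conf_trans hc c1.
  have hCy : scone S d (x1 - t *: x2).
    apply: (conf_C hCx) cy; case: hC1 => ? _; case: hC2 => ? _.
    by apply: memvB => //; apply: memvZ.
  have := h _ hCy ynz (subx _ cy).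
  have xj : x 0 j != 0.
    by apply/eqP => xj; move: x1j; rewrite (conf_zero c1 xj) eqxx.
  by move/setP/(_ j); rewrite !inE yj eqxx xj.
split; split; auto.
Qed.
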